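(* Let $V$ be a real vector space of dimension $n$ and $2\le k\le n-1$. A non-standard isotropic subspace $L\subseteq V\oplus\wedge^kV^*$ always satisfies (C3s), and never satisfies (C3w) or (C1). The properties (C2w) and (C2s) are independent for non-standard isotropic subspaces: there exist non-standard isotropic subspaces satisfying (C2s) but not (C2w), and ones satisfying (C2w) but not (C2s).
   Context: On $V\oplus\wedge^kV^*$ the pairing is $\langle X+\alpha,Y+\beta\rangle=i_X\beta+i_Y\alpha\in\wedge^{k-1}V^*$, with orthogonal $L^\perp$; $L$ is isotropic if $L\subseteq L^\perp$. $\mathrm{pr}_1,\mathrm{pr}_2$ are the projections; $E=\mathrm{pr}_1(L)$, $A_L=L\cap\wedge^kV^*$. For $W\subseteq V$, $\mathrm{Ann}(W)=\{\alpha\in\wedge^kV^*\mid i_Y\alpha=0\ \forall Y\in W\}$; for $S\subseteq\wedge^kV^*$, $S^\circ=\{X\in V\mid i_X\eta=0\ \forall\eta\in S\}$. An isotropic $L$ is non-standard if $\mathrm{Ann}(E)^\circ\neq E$, equivalently $n-k<\dim E<n$. Conditions: (C1) $L=L^\perp$; (C2w) $L\subseteq L^\perp$ and $L\cap V=\mathrm{pr}_2(L)^\circ$; (C2s) $L\subseteq L^\perp$ and $\mathrm{Ann}(L\cap V)=\mathrm{pr}_2(L)$; (C3w) $L\subseteq L^\perp$ and $E=A_L^\circ$; (C3s) $L\subseteq L^\perp$ and $\mathrm{Ann}(E)=A_L$. *)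

(* Defs.v *)
From mathcomp Require Import all_boot all_order all_algebra.
From mathcomp Require Import reals.
Set Implicit Arguments. Unset Strict Implicit. Unset Printing Implicit Defensive.
Import GRing.Theory Num.Theory.
Local Open Scope ring_scope.

(* V = R^n is 'rV[R]_n.  A (candidate) k-form on V is a function of k vectors;
   wedge^k V^* is the set of such functions that are multilinear and alternating. *)
Definition form (R : realType) (n k : nat) := ('I_k -> 'rV[R]_n) -> R.

Definition upd (R : realType) (n k : nat) (v : 'I_k -> 'rV[R]_n) (i : 'I_k)
  (x : 'rV[R]_n) : 'I_k -> 'rV[R]_n := fun j => if j == i then x else v j.

Definition is_kform (R : realType) (n k : nat) (f : form R n k) : Prop :=
  (forall (v : 'I_k -> 'rV[R]_n) (i : 'I_k) (a : R) (x y : 'rV[R]_n),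
      f (upd v i (a *: x + y)) = a * f (upd v i x) + f (upd v i y)) /\
  (forall (v : 'I_k -> 'rV[R]_n) (i j : 'I_k), i != j -> v i = v j -> f v = 0).

(* (X, v_1, ..., v_{k-1}) as a k-tuple of vectors *)
Definition cons_arg (R : realType) (n k : nat) (X : 'rV[R]_n)
  (v : 'I_k.-1 -> 'rV[R]_n) : 'I_k -> 'rV[R]_n :=
  fun i => match val i with
           | 0 => X
           | j.+1 => match (insub j : option 'I_k.-1) with
                     | Some j' => v j'
                     | None => X
                     end
           end.

Definition contract (R : realType) (n k : nat) (X : 'rV[R]_n) (alpha : form R n k)
  : form R n k.-1 := fun v => alpha (cons_arg X v).

(* Elements of V (+) wedge^k V^* are pairs (X, alpha); subsets are predicates. *)
Definition elt (R : realType) (n k : nat) := ('rV[R]_n * form R n k)%type.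

Definition is_subspace (R : realType) (n k : nat) (L : elt R n k -> Prop) : Prop :=
  (forall p, L p -> is_kform p.2) /\
  L (0, fun _ => 0) /\
  (forall p q, L p -> L q -> L (p.1 + q.1, fun v => p.2 v + q.2 v)) /\
  (forall (a : R) p, L p -> L (a *: p.1, fun v => a * p.2 v)).

Definition pairing (R : realType) (n k : nat) (p q : elt R n k) : form R n k.-1 :=
  fun v => contract p.1 q.2 v + contract q.1 p.2 v.

Definition orth (R : realType) (n k : nat) (L : elt R n k -> Prop) : elt R n k -> Prop :=
  fun q => is_kform q.2 /\ forall p, L p -> forall v, pairing p q v = 0.

Definition isotropic (R : realType) (n k : nat) (L : elt R n k -> Prop) : Prop :=
  forall p, L p -> orth L p.

Definition pr1L (R : realType) (n k : nat) (L : elt R n k -> Prop) : 'rV[R]_n -> Prop :=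
  fun X => exists alpha, L (X, alpha).
Definition pr2L (R : realType) (n k : nat) (L : elt R n k -> Prop) : form R n k -> Prop :=
  fun alpha => exists X, L (X, alpha).
Definition AL (R : realType) (n k : nat) (L : elt R n k -> Prop) : form R n k -> Prop :=
  fun alpha => L (0, alpha).
Definition LcapV (R : realType) (n k : nat) (L : elt R n k -> Prop) : 'rV[R]_n -> Prop :=
  fun X => L (X, fun _ => 0).

Definition Ann (R : realType) (n k : nat) (W : 'rV[R]_n -> Prop) : form R n k -> Prop :=
  fun alpha => is_kform alpha /\ forall Y, W Y -> forall v, contract Y alpha v = 0.
Definition circ (R : realType) (n k : nat) (S : form R n k -> Prop) : 'rV[R]_n -> Prop :=
  fun X => forall eta, S eta -> forall v, contract X eta v = 0.

Definition nonstandard (R : realType) (n k : nat) (L : elt R n k -> Prop) : Prop :=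
  isotropic L /\ ~ (forall X, circ (Ann (k := k) (pr1L L)) X <-> pr1L L X).

Definition C1 (R : realType) (n k : nat) (L : elt R n k -> Prop) : Prop :=
  forall q, L q <-> orth L q.
Definition C2w (R : realType) (n k : nat) (L : elt R n k -> Prop) : Prop :=
  isotropic L /\ forall X, LcapV L X <-> circ (pr2L L) X.
Definition C2s (R : realType) (n k : nat) (L : elt R n k -> Prop) : Prop :=
  isotropic L /\ forall alpha, Ann (k := k) (LcapV L) alpha <-> pr2L L alpha.
Definition C3w (R : realType) (n k : nat) (L : elt R n k -> Prop) : Prop :=
  isotropic L /\ forall X, pr1L L X <-> circ (AL L) X.
Definition C3s (R : realType) (n k : nat) (L : elt R n k -> Prop) : Prop :=
  isotropic L /\ forall alpha, Ann (k := k) (pr1L L) alpha <-> AL L alpha.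

(* Main.v *)
Require Import Defs.
From mathcomp Require Import all_boot all_order all_algebra.
From mathcomp Require Import reals.
From mathcomp Require Import ring lra zify.
From Stdlib Require Import FunctionalExtensionality Classical ClassicalEpsilon PropExtensionality.
Set Implicit Arguments. Unset Strict Implicit. Unset Printing Implicit Defensive.
Import GRing.Theory Num.Theory.
Local Open Scope ring_scope.

Lemma upd_id (R : realType) n k (v : 'I_k -> 'rV[R]_n) i : upd v i (v i) = v.
Proof. apply: functional_extensionality => j; rewrite /upd; case: eqP => [->|] //. Qed.

Lemma upd_upd (R : realType) n k (v : 'I_k -> 'rV[R]_n) i x y : upd (upd v i x) i y = upd v i y.
Proof. apply: functional_extensionality => j; rewrite /upd; case: eqP => //. Qed.

Lemma upd_comm (R : realType) n k (v : 'I_k -> 'rV[R]_n) i j x y : i != j ->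
  upd (upd v i x) j y = upd (upd v j y) i x.
Proof.
move=> ij; apply: functional_extensionality => l; rewrite /upd.
case: (eqVneq l i) => [li|li]; case: (eqVneq l j) => [lj|lj] //.
by move: ij; rewrite -li -lj eqxx.
Qed.

Lemma upd_eq (R : realType) n k (v : 'I_k -> 'rV[R]_n) i x : upd v i x i = x.
Proof. by rewrite /upd eqxx. Qed.

Lemma upd_neq (R : realType) n k (v : 'I_k -> 'rV[R]_n) i j x : j != i -> upd v i x j = v j.
Proof. by rewrite /upd => /negbTE ->. Qed.

Lemma kf_add (R : realType) n k (f : Defs.form R n k) : is_kform f -> forall v i x y,
  f (upd v i (x + y)) = f (upd v i x) + f (upd v i y).
Proof. by move=> [H _] v i x y; rewrite -[x]scale1r H mul1r scale1r. Qed.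

Lemma kf_zero (R : realType) n k (f : Defs.form R n k) : is_kform f -> forall v i,
  f (upd v i 0) = 0.
Proof.
move=> Hf v i; have := kf_add Hf v i 0 0; rewrite addr0 => /eqP.
by rewrite -subr_eq0 opprD addrA subrr sub0r oppr_eq0 => /eqP.
Qed.

Lemma kf_scale (R : realType) n k (f : Defs.form R n k) : is_kform f -> forall v i a x,
  f (upd v i (a *: x)) = a * f (upd v i x).
Proof. by move=> Hf v i a x; rewrite -[a *: x]addr0 Hf.1 kf_zero // addr0. Qed.

Lemma kf_opp (R : realType) n k (f : Defs.form R n k) : is_kform f -> forall v i x,
  f (upd v i (- x)) = - f (upd v i x).
Proof. by move=> Hf v i x; rewrite -scaleN1r kf_scale // mulN1r. Qed.

Lemma kf_sub (R : realType) n k (f : Defs.form R n k) : is_kform f -> forall v i x y,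
  f (upd v i (x - y)) = f (upd v i x) - f (upd v i y).
Proof. by move=> Hf v i x y; rewrite kf_add // kf_opp. Qed.

Lemma kf_alt (R : realType) n k (f : Defs.form R n k) : is_kform f -> forall v i j x,
  i != j -> f (upd (upd v i x) j x) = 0.
Proof.
move=> [_ H] v i j x ij; apply: (H _ i j ij).
by rewrite upd_eq upd_neq // upd_eq.
Qed.

Lemma kf_swap (R : realType) n k (f : Defs.form R n k) : is_kform f -> forall v i j x y,
  i != j -> f (upd (upd v i x) j y) = - f (upd (upd v i y) j x).
Proof.
move=> Hf v i j x y ij.
have A : forall a b c, f (upd (upd v i (a + b)) j c) =
   f (upd (upd v i a) j c) + f (upd (upd v i b) j c).
  by move=> a b c; rewrite !(upd_comm _ _ _ ij) (kf_add Hf).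
have := kf_alt Hf v (x + y) ij.
rewrite kf_add // !A !kf_alt // add0r addr0 => /eqP.
by rewrite addrC addr_eq0 => /eqP.
Qed.

Definition tl (R : realType) n k (v : 'I_k.+1 -> 'rV[R]_n) : 'I_k -> 'rV[R]_n :=
  fun j => v (lift ord0 j).

Lemma cons_0 (R : realType) n k (X : 'rV[R]_n) (v : 'I_k -> 'rV[R]_n) :
  cons_arg (k := k.+1) X v ord0 = X.
Proof. by []. Qed.

Lemma cons_lift (R : realType) n k (X : 'rV[R]_n) (v : 'I_k -> 'rV[R]_n) j :
  cons_arg (k := k.+1) X v (lift ord0 j) = v j.
Proof.
rewrite /cons_arg /= add0n.
case: insubP => [j' _ /val_inj -> //|]; by rewrite ltn_ord.
Qed.

Lemma cons_tl (R : realType) n k (v : 'I_k.+1 -> 'rV[R]_n) :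
  cons_arg (k := k.+1) (v ord0) (tl v) = v.
Proof.
apply: functional_extensionality => i.
case: (unliftP ord0 i) => [j ->|->]; first by rewrite cons_lift.
by [].
Qed.

Lemma tl_cons (R : realType) n k (X : 'rV[R]_n) (v : 'I_k -> 'rV[R]_n) :
  tl (cons_arg (k := k.+1) X v) = v.
Proof. by apply: functional_extensionality => j; rewrite /tl cons_lift. Qed.

Lemma upd_cons0 (R : realType) n k (X Y : 'rV[R]_n) (v : 'I_k -> 'rV[R]_n) :
  upd (cons_arg (k := k.+1) X v) ord0 Y = cons_arg (k := k.+1) Y v.
Proof.
apply: functional_extensionality => i.
case: (unliftP ord0 i) => [j ->|->]; last by rewrite upd_eq.
by rewrite upd_neq ?neq_lift // !cons_lift.
Qed.

Lemma upd_consS (R : realType) n k (X Y : 'rV[R]_n) (v : 'I_k -> 'rV[R]_n) j :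
  upd (cons_arg (k := k.+1) X v) (lift ord0 j) Y = cons_arg (k := k.+1) X (upd v j Y).
Proof.
apply: functional_extensionality => i.
case: (unliftP ord0 i) => [l ->|->]; last first.
  by rewrite upd_neq // eq_sym neq_lift.
rewrite cons_lift /upd (inj_eq (@lift_inj _ ord0)); case: eqP => // _.
by rewrite cons_lift.
Qed.

Lemma contract_kform (R : realType) n k (X : 'rV[R]_n) (a : Defs.form R n k.+1) :
  is_kform a -> is_kform (contract X a).
Proof.
move=> [H1 H2]; split.
  by move=> v i b x y; rewrite /contract -!upd_consS H1.
move=> v i j ij vij; rewrite /contract; apply: (H2 _ (lift ord0 i) (lift ord0 j)).
  by rewrite (inj_eq (@lift_inj _ ord0)).
by rewrite !cons_lift.
Qed.

Lemma contract_lin (R : realType) n k (a : Defs.form R n k.+1) : is_kform a ->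
  forall b (X Y : 'rV[R]_n) v,
  contract (b *: X + Y) a v = b * contract X a v + contract Y a v.
Proof.
move=> Ha b X Y v; rewrite /contract -(upd_cons0 0 (b *: X + Y)) -(upd_cons0 0 X).
by rewrite -(upd_cons0 0 Y) Ha.1.
Qed.

Lemma contract0 (R : realType) n k (a : Defs.form R n k.+1) : is_kform a ->
  forall v, contract 0 a v = 0.
Proof. by move=> Ha v; rewrite /contract -(upd_cons0 0) kf_zero. Qed.

Lemma contract_add (R : realType) n k (a : Defs.form R n k.+1) : is_kform a ->
  forall (X Y : 'rV[R]_n) v,
  contract (X + Y) a v = contract X a v + contract Y a v.
Proof. by move=> Ha X Y v; rewrite -[X]scale1r contract_lin // mul1r scale1r. Qed.

Lemma contract_scale (R : realType) n k (a : Defs.form R n k.+1) : is_kform a ->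
  forall b (X : 'rV[R]_n) v, contract (b *: X) a v = b * contract X a v.
Proof. by move=> Ha b X v; rewrite -[b *: X]addr0 contract_lin // contract0 // addr0. Qed.

Lemma kf_swap01 (R : realType) n k (a : Defs.form R n k.+2) : is_kform a ->
  forall (X Y : 'rV[R]_n) (w : 'I_k -> 'rV[R]_n),
  a (cons_arg (k := k.+2) X (cons_arg (k := k.+1) Y w)) =
  - a (cons_arg (k := k.+2) Y (cons_arg (k := k.+1) X w)).
Proof.
move=> Ha X Y w.
have E : forall P Q, cons_arg (k := k.+2) P (cons_arg (k := k.+1) Q w) =
   upd (upd (cons_arg (k := k.+2) 0 (cons_arg (k := k.+1) 0 w)) ord0 P) (lift ord0 ord0) Q.
  by move=> P Q; rewrite upd_cons0 upd_consS upd_cons0.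
by rewrite (E X Y) (E Y X) kf_swap.
Qed.

Lemma subspace_mx (R : realType) n (E : 'rV[R]_n -> Prop) :
  E 0 -> (forall X Y, E X -> E Y -> E (X + Y)) -> (forall a X, E X -> E (a *: X)) ->
  exists M : 'M[R]_n, forall Y, E Y <-> (Y <= M)%MS.
Proof.
move=> E0 ED EZ.
pose P (M : 'M[R]_n) := forall Z : 'rV_n, (Z <= M)%MS -> E Z.
have key : forall r, (exists M, P M /\ (forall Y, E Y -> (Y <= M)%MS)) \/
                     exists M, P M /\ (r <= \rank M)%N.
  elim => [|r [|[M [PM rM]]]]; first 2 last.
  - case: (classic (forall Y, E Y -> (Y <= M)%MS)) => [H|H]; first by left; exists M.
    have [Y [EY nYM]] : exists Y, E Y /\ ~ (Y <= M)%MS.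
      apply: NNPP => H'; apply: H => Y EY; apply: NNPP => nY; apply: H'; exists Y; done.
    right; exists (M + Y)%MS; split.
      move=> Z /sub_addsmxP [[u1 u2] /= ->]; apply: ED; first by apply: PM; exact: submxMl.
      have : (u2 *m Y <= Y)%MS by exact: submxMl.
      by move/sub_rVP => [a ->]; exact: EZ.
    have : (M < M + Y)%MS.
      rewrite ltmxE addsmxSl /=; apply/negP => HM; apply: nYM.
      exact: submx_trans (addsmxSr M Y) HM.
    by rewrite ltmxErank => /andP [_ lt]; exact: leq_ltn_trans rM lt.
  - by right; exists 0; split => // Z; rewrite submx0 => /eqP ->.
  - by left.
case: (key n.+1) => [[M [PM H]]|[M [_ H]]].
  by exists M => Y; split; [exact: H | exact: PM].
by have := leq_trans H (rank_leq_col M); rewrite ltnn.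
Qed.

Lemma functional_sep (R : realType) n (M : 'M[R]_n) (X0 : 'rV_n) : ~ (X0 <= M)%MS ->
  exists f : 'rV[R]_n -> R, (forall a X Y, f (a *: X + Y) = a * f X + f Y) /\
    (forall Y, (Y <= M)%MS -> f Y = 0) /\ f X0 = 1.
Proof.
move=> nX; set K := cokermx M.
have [j Hj] : exists j, (X0 *m K) 0 j != 0.
  apply: NNPP => H; apply: nX; rewrite submxE; apply/eqP/matrixP => i j.
  rewrite [i]ord1 [in RHS]mxE; apply/eqP; apply: NNPP => H2; apply: H; exists j; by apply/negP.
exists (fun Y => (Y *m K) 0 j / (X0 *m K) 0 j); split; [|split].
- by move=> a X Y; rewrite mulmxDl -scalemxAl !mxE mulrDl mulrA.
- by move=> Y; rewrite submxE => /eqP ->; rewrite mxE mul0r.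
- by rewrite divff.
Qed.

Lemma functional_sepE (R : realType) n (E : 'rV[R]_n -> Prop) (X0 : 'rV_n) :
  E 0 -> (forall X Y, E X -> E Y -> E (X + Y)) -> (forall a X, E X -> E (a *: X)) ->
  ~ E X0 ->
  exists f : 'rV[R]_n -> R, (forall a X Y, f (a *: X + Y) = a * f X + f Y) /\
    (forall Y, E Y -> f Y = 0) /\ f X0 = 1.
Proof.
move=> E0 ED EZ nX.
have [M HM] := subspace_mx E0 ED EZ.
have [f [f1 [f2 f3]]] : exists f : 'rV[R]_n -> R, (forall a X Y, f (a *: X + Y) = a * f X + f Y) /\
    (forall Y, (Y <= M)%MS -> f Y = 0) /\ f X0 = 1.
  by apply: functional_sep => H; apply: nX; apply/HM.
by exists f; split => //; split => // Y /HM; exact: f2.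
Qed.

Definition mapv (R : realType) n k (S : 'rV[R]_n -> 'rV[R]_n) (v : 'I_k -> 'rV[R]_n) :
  'I_k -> 'rV[R]_n := fun i => S (v i).

Lemma map_upd (R : realType) n k (S : 'rV[R]_n -> 'rV[R]_n) (v : 'I_k -> 'rV[R]_n) j x :
  mapv S (upd v j x) = upd (mapv S v) j (S x).
Proof. by apply: functional_extensionality => i; rewrite /mapv /upd; case: eqP. Qed.

Lemma map_cons (R : realType) n k (S : 'rV[R]_n -> 'rV[R]_n) X (w : 'I_k -> 'rV[R]_n) :
  mapv S (cons_arg (k := k.+1) X w) = cons_arg (k := k.+1) (S X) (mapv S w).
Proof.
apply: functional_extensionality => i; rewrite /mapv.
by case: (unliftP ord0 i) => [j ->|->]; rewrite ?cons_lift.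
Qed.

Lemma pull_kform (R : realType) n k (S : 'rV[R]_n -> 'rV[R]_n) (a : Defs.form R n k) :
  (forall (b : R) x y, S (b *: x + y) = b *: S x + S y) -> is_kform a ->
  is_kform (fun v => a (mapv S v)).
Proof.
move=> HS [H1 H2]; split.
  by move=> v i b x y /=; rewrite !map_upd HS H1.
by move=> v i j ij vij; apply: (H2 _ i j ij); rewrite /mapv vij.
Qed.

Lemma annE_zero (R : realType) n k (E : 'rV[R]_n -> Prop) (X0 : 'rV_n) :
  E 0 -> (forall X Y, E X -> E Y -> E (X + Y)) -> (forall a X, E X -> E (a *: X)) ->
  ~ E X0 -> circ (Ann (k := k.+1) E) X0 ->
  forall alpha, Ann (k := k.+1) E alpha -> forall v, alpha v = 0.
Proof.
move=> E0 ED EZ nX cX alpha [Ha HE].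
have [f [fl [fE f1]]] := functional_sepE E0 ED EZ nX.
have fD : forall x y, f (x + y) = f x + f y by move=> x y; have := fl 1 x y; rewrite scale1r mul1r.
have f0 : f 0 = 0.
  by have := fD 0 0; rewrite addr0 => /eqP; rewrite -subr_eq0 opprD addrA subrr sub0r oppr_eq0 => /eqP.
have fZ : forall b x, f (b *: x) = b * f x by move=> b x; rewrite -[b *: x]addr0 fl f0 addr0.
have fB : forall x y, f (x - y) = f x - f y by move=> x y; rewrite fD -scaleN1r fZ mulN1r.
have key : forall u w, f u != 0 -> alpha (cons_arg (k := k.+1) u w) = 0.
  move=> u w fu.
  pose S := fun Z : 'rV[R]_n => Z + f Z *: (u - X0).
  pose T := fun Z : 'rV[R]_n => Z - (f Z / f u) *: (u - X0).
  have SL : forall (b : R) x y, S (b *: x + y) = b *: S x + S y.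
    by move=> b x y; rewrite /S fl scalerDl [b *: (x + _)]scalerDr scalerA addrACA.
  have ST : forall Z, S (T Z) = Z.
    move=> Z; rewrite /S /T fB fZ fB f1 -addrA -scaleNr -scalerDl.
    have -> : - (f Z / f u) + (f Z - f Z / f u * (f u - 1)) = 0 by field.
    by rewrite scale0r addr0.
  have SX0 : S X0 = u by rewrite /S f1 scale1r addrC subrK.
  have SY : forall Y, E Y -> S Y = Y by move=> Y EY; rewrite /S fE // scale0r addr0.
  have Heta : Ann (k := k.+1) E (fun v => alpha (mapv S v)).
    split; first exact: pull_kform.
    by move=> Y EY v; rewrite /contract map_cons SY //; exact: HE.
  have := cX _ Heta (mapv T w); rewrite /contract map_cons SX0.
  have -> : mapv S (mapv T w) = w.
    by apply: functional_extensionality => i; rewrite /mapv ST.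
  by [].
have key2 : forall u w, alpha (cons_arg (k := k.+1) u w) = 0.
  move=> u w; case: (eqVneq (f u) 0) => fu; last exact: key.
  have -> : u = (u + X0) - X0 by rewrite addrK.
  have := contract_add Ha (u + X0) (- X0) w; rewrite /contract => ->.
  rewrite (key (u + X0)); last by rewrite fD fu f1 add0r oner_neq0.
  rewrite add0r -scaleN1r -(upd_cons0 X0 (-1 *: X0) w) kf_scale // upd_cons0.
  by rewrite key ?f1 ?oner_neq0 // mulr0.
by move=> v; rewrite -(cons_tl v) key2.
Qed.

Lemma kform_add (R : realType) n k (a b : Defs.form R n k) :
  is_kform a -> is_kform b -> is_kform (fun v => a v + b v).
Proof.
move=> [A1 A2] [B1 B2]; split.
  by move=> v i c x y; rewrite A1 B1 mulrDr addrACA.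
by move=> v i j ij vij; rewrite (A2 _ _ _ ij vij) (B2 _ _ _ ij vij) addr0.
Qed.

Lemma kform_scale (R : realType) n k (c : R) (a : Defs.form R n k) :
  is_kform a -> is_kform (fun v => c * a v).
Proof.
move=> [A1 A2]; split.
  by move=> v i b x y; rewrite A1 mulrDr mulrCA.
by move=> v i j ij vij; rewrite (A2 _ _ _ ij vij) mulr0.
Qed.

Lemma kform0 (R : realType) n k : is_kform (fun _ : 'I_k -> 'rV[R]_n => (0 : R)).
Proof. by split => *; rewrite ?mulr0 ?addr0. Qed.

Lemma tl_upd0 (R : realType) n k (v : 'I_k.+1 -> 'rV[R]_n) x : tl (upd v ord0 x) = tl v.
Proof. by apply: functional_extensionality => j; rewrite /tl upd_neq // neq_lift. Qed.

Lemma tl_updS (R : realType) n k (v : 'I_k.+1 -> 'rV[R]_n) j x :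
  tl (upd v (lift ord0 j) x) = upd (tl v) j x.
Proof.
apply: functional_extensionality => l; rewrite /tl /upd (inj_eq (@lift_inj _ ord0)).
by [].
Qed.

Lemma eq_opp0 (R : realType) (a : R) : a = - a -> a = 0.
Proof. by move=> H; lra. Qed.

Definition lin_on (R : realType) n k (E : 'rV[R]_n -> Prop) (phi : 'rV[R]_n -> Defs.form R n k) :=
  forall a Y Z, E Y -> E Z -> forall w, phi (a *: Y + Z) w = a * phi Y w + phi Z w.
Definition kf_on (R : realType) n k (E : 'rV[R]_n -> Prop) (phi : 'rV[R]_n -> Defs.form R n k) :=
  forall Y, E Y -> is_kform (phi Y).
Definition asym_on (R : realType) n k (E : 'rV[R]_n -> Prop) (phi : 'rV[R]_n -> Defs.form R n k) :=
  forall Y Z, E Y -> E Z -> forall w, contract Z (phi Y) w = - contract Y (phi Z) w.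

Lemma asym_diag (R : realType) n k (phi : 'rV[R]_n -> Defs.form R n k.+1) :
  kf_on (fun _ => True) phi -> asym_on (fun _ => True) phi ->
  forall x (w : 'I_k.+1 -> 'rV[R]_n) j, w j = x -> phi x w = 0.
Proof.
move=> Hk Ha x w j wj.
have H0 : forall w' : 'I_k.+1 -> 'rV[R]_n, w' ord0 = x -> phi x w' = 0.
  move=> w' w0; rewrite -(cons_tl w') w0; apply: eq_opp0.
  by have := Ha x x I I (tl w'); rewrite /contract.
case: (eqVneq j ord0) => [ej|nj]; first by apply: H0; rewrite -ej.
have Ew : w = upd (upd w ord0 (w ord0)) j x by rewrite upd_id -wj upd_id.
rewrite Ew (kf_swap (Hk x I)) 1?eq_sym //.
by rewrite H0 ?oppr0 // upd_neq 1?eq_sym // upd_eq.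
Qed.

Lemma diag_gen (R : realType) n k (phi : 'rV[R]_n -> Defs.form R n k) :
  kf_on (fun _ => True) phi -> ((0 < k)%N -> asym_on (fun _ => True) phi) ->
  forall x (w : 'I_k -> 'rV[R]_n) j, w j = x -> phi x w = 0.
Proof.
case: k phi => [|k] phi Hk Ha x w j; first by case: j.
by move=> wj; exact: (asym_diag Hk (Ha isT) wj).
Qed.

Lemma ext_full (R : realType) n k (phi : 'rV[R]_n -> Defs.form R n k) :
  kf_on (fun _ => True) phi -> lin_on (fun _ => True) phi ->
  ((0 < k)%N -> asym_on (fun _ => True) phi) ->
  exists beta : Defs.form R n k.+1, is_kform beta /\
    forall Y w, beta (cons_arg (k := k.+1) Y w) = phi Y w.
Proof.
move=> Hk Hl Ha.
exists (fun v => phi (v ord0) (tl v)); split; last by move=> Y w; rewrite tl_cons.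
split.
  move=> v i a x y; case: (unliftP ord0 i) => [j ->|->].
    by rewrite !upd_neq ?neq_lift // !tl_updS (Hk _ I).1.
  by rewrite !upd_eq !tl_upd0; apply: Hl.
move=> v i j ij vij.
have H : forall i' : 'I_k, v (lift ord0 i') = v ord0 -> phi (v ord0) (tl v) = 0.
  by move=> i' Hi; apply: (diag_gen Hk Ha (j := i')).
case: (unliftP ord0 i) => [i' ei|ei]; case: (unliftP ord0 j) => [j' ej|ej].
- apply: ((Hk _ I).2 (tl v) i' j').
    by move: ij; rewrite ei ej (inj_eq (@lift_inj _ ord0)).
  by rewrite /tl -ei -ej.
- by apply: (H i'); rewrite -ei -ej.
- by apply: (H j'); rewrite -ej -ei.
- by move: ij; rewrite ei ej eqxx.
Qed.

Lemma kform_opp (R : realType) n k (a : Defs.form R n k) :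
  is_kform a -> is_kform (fun v => - a v).
Proof.
move=> Ha; have := kform_scale (-1) Ha.
by have -> : (fun v => -1 * a v) = (fun v => - a v)
  by apply: functional_extensionality => v; rewrite mulN1r.
Qed.

Lemma kf_swap01' (R : realType) n k (a : Defs.form R n k.+1) : (0 < k)%N -> is_kform a ->
  forall (X Y : 'rV[R]_n) (w : 'I_k.-1 -> 'rV[R]_n),
  a (cons_arg (k := k.+1) X (cons_arg (k := k) Y w)) =
  - a (cons_arg (k := k.+1) Y (cons_arg (k := k) X w)).
Proof. by case: k a => [//|k] a _ Ha X Y w; exact: kf_swap01. Qed.

Lemma kf_alt01' (R : realType) n k (a : Defs.form R n k.+1) : (0 < k)%N -> is_kform a ->
  forall (X : 'rV[R]_n) (w : 'I_k.-1 -> 'rV[R]_n),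
  a (cons_arg (k := k.+1) X (cons_arg (k := k) X w)) = 0.
Proof. by move=> k0 Ha X w; apply: eq_opp0; rewrite {1}kf_swap01'. Qed.

Lemma decomp (R : realType) n k (a : Defs.form R n k.+1) : is_kform a ->
  forall (Y c : 'rV[R]_n) (t : R) (w : 'I_k -> 'rV[R]_n),
  a (cons_arg (k := k.+1) Y w) = a (cons_arg (k := k.+1) (Y - t *: c) w) + t * a (cons_arg (k := k.+1) c w).
Proof.
move=> Ha Y c t w.
rewrite [RHS]addrC; have := contract_lin Ha t c (Y - t *: c) w; rewrite /contract => <-.
by rewrite addrC subrK.
Qed.

Lemma linf_facts (R : realType) n (f : 'rV[R]_n -> R) :
  (forall a X Y, f (a *: X + Y) = a * f X + f Y) ->
  [/\ forall x y, f (x + y) = f x + f y, f 0 = 0, forall b x, f (b *: x) = b * f x &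
      forall x y, f (x - y) = f x - f y].
Proof.
move=> fl.
have fD : forall x y, f (x + y) = f x + f y by move=> x y; have := fl 1 x y; rewrite scale1r mul1r.
have f0 : f 0 = 0 by have := fD 0 0; rewrite addr0 => H; lra.
have fZ : forall b x, f (b *: x) = b * f x by move=> b x; rewrite -[b *: x]addr0 fl f0 addr0.
split => // x y; by rewrite fD -scaleN1r fZ mulN1r.
Qed.

Lemma ext_fullM (R : realType) n k (M : 'M[R]_n) (phi : 'rV[R]_n -> Defs.form R n k) :
  (forall Y : 'rV[R]_n, (Y <= M)%MS) ->
  kf_on (fun Y => (Y <= M)%MS) phi -> lin_on (fun Y => (Y <= M)%MS) phi ->
  ((0 < k)%N -> asym_on (fun Y => (Y <= M)%MS) phi) ->
  exists beta : Defs.form R n k.+1, is_kform beta /\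
    forall Y, (Y <= M)%MS -> forall w, beta (cons_arg (k := k.+1) Y w) = phi Y w.
Proof.
move=> full Hk Hl Ha.
have [beta [Hb1 Hb2]] := ext_full (phi := phi) (fun Y _ => Hk Y (full Y))
  (fun a Y Z _ _ => Hl a Y Z (full Y) (full Z)) (fun h Y Z _ _ => Ha h Y Z (full Y) (full Z)).
by exists beta; split => // Y _ w.
Qed.

Lemma ext_mx (R : realType) n : forall d k (M : 'M[R]_n), (n - \rank M <= d)%N ->
  forall phi : 'rV[R]_n -> Defs.form R n k,
  kf_on (fun Y => (Y <= M)%MS) phi -> lin_on (fun Y => (Y <= M)%MS) phi ->
  ((0 < k)%N -> asym_on (fun Y => (Y <= M)%MS) phi) ->
  exists beta : Defs.form R n k.+1, is_kform beta /\
    forall Y, (Y <= M)%MS -> forall w, beta (cons_arg (k := k.+1) Y w) = phi Y w.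
Proof.
elim => [|d IH] k M hd phi Hk Hl Ha.
  have full : forall Y : 'rV_n, (Y <= M)%MS.
    move=> Y; apply: submx_full.
    by rewrite /row_full eqn_leq rank_leq_col /=; move: hd; rewrite leqn0 subn_eq0.
  exact: (@ext_fullM R n k M phi full Hk Hl Ha).
case: (classic (forall Y : 'rV_n, (Y <= M)%MS)) => [full|nfull].
  exact: (@ext_fullM R n k M phi full Hk Hl Ha).
have [c nc] : exists c : 'rV[R]_n, ~ (c <= M)%MS.
  by apply: NNPP => H; apply: nfull => Y; apply: NNPP => HY; apply: H; exists Y.
have [f [fl [fE fc]]] := functional_sep nc.
have [fD f0 fZ fB] := linf_facts fl.
pose M' := (M + c)%MS.
have hd' : (n - \rank M' <= d)%N.
  have : (M < M')%MS.
    rewrite ltmxE addsmxSl /=; apply/negP => HM; apply: nc.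
    exact: submx_trans (addsmxSr M c) HM.
  rewrite ltmxErank => /andP [_ lt].
  have := rank_leq_col M'; lia.
pose P := fun Y : 'rV[R]_n => Y - f Y *: c.
have PM : forall Y : 'rV[R]_n, (Y <= M')%MS -> (P Y <= M)%MS.
  move=> Y /sub_addsmxP [[u1 u2] /= ->].
  have : (u2 *m c <= c)%MS by exact: submxMl.
  move/sub_rVP => [a ->].
  rewrite /P fD fZ fc mulr1 fE ?submxMl // add0r addrK; exact: submxMl.
have MM' : forall Y : 'rV[R]_n, (Y <= M)%MS -> (Y <= M')%MS.
  by move=> Y HY; apply: submx_trans HY _; exact: addsmxSl.
have cM' : (c <= M')%MS by exact: addsmxSr.
have PY : forall Y : 'rV[R]_n, (Y <= M)%MS -> P Y = Y by move=> Y HY; rewrite /P fE // scale0r subr0.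
have Plin : forall (a : R) (Y Z : 'rV[R]_n), P (a *: Y + Z) = a *: P Y + P Z.
  move=> a Y Z; rewrite /P fl scalerDl scalerBr scalerA; rewrite opprD addrACA.
  by rewrite -!addrA; congr (_ + _); rewrite addrCA.
case: k phi Hk Hl Ha => [|k] phi Hk Hl Ha.
  have K0 : kf_on (fun Y => (Y <= M')%MS) (fun Y => phi (P Y)).
    by move=> Y HY; apply: Hk; exact: PM.
  have L0 : lin_on (fun Y => (Y <= M')%MS) (fun Y => phi (P Y)).
    by move=> a Y Z HY HZ w /=; rewrite Plin; apply: Hl; exact: PM.
  have [beta [Hb1 Hb2]] := IH 0%N M' hd' _ K0 L0 (fun h => False_ind _ (notF h)).
  by exists beta; split => // Y HY w; rewrite Hb2 ?PY ?MM'.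
pose phi1 := fun (Y : 'rV[R]_n) w => - contract c (phi (P Y)) w.
have K1 : kf_on (fun Y => (Y <= M')%MS) phi1.
  by move=> Y HY; apply: kform_opp; apply: contract_kform; apply: Hk; exact: PM.
have L1 : lin_on (fun Y => (Y <= M')%MS) phi1.
  by move=> a Y Z HY HZ w; rewrite /phi1 Plin /contract Hl ?PM // opprD mulrN.
have A1 : (0 < k)%N -> asym_on (fun Y => (Y <= M')%MS) phi1.
  move=> h Y1 Y2 HY1 HY2 w; rewrite /phi1 /contract /=.
  rewrite (kf_swap01' h (Hk _ (PM Y1 HY1))).
  rewrite (kf_swap01' h (Hk _ (PM Y2 HY2))).
  rewrite opprK (decomp (Hk _ (PM Y1 HY1)) Y2 c (f Y2)).
  rewrite (decomp (Hk _ (PM Y2 HY2)) Y1 c (f Y1)).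
  rewrite !(kf_alt01' h); [|exact: Hk (PM _ HY2)|exact: Hk (PM _ HY1)].
  rewrite !mulr0 !addr0 !opprK.
  have := Ha isT (P Y1) (P Y2) (PM Y1 HY1) (PM Y2 HY2) (cons_arg (k := k) c w).
  by rewrite /contract /P => ->.
have [psi [Hpsi1 Hpsi2]] := IH k M' hd' phi1 K1 L1 A1.
pose phi2 := fun (Y : 'rV[R]_n) w => phi (P Y) w + f Y * psi w.
have K2 : kf_on (fun Y => (Y <= M')%MS) phi2.
  by move=> Y HY; apply: kform_add; [apply: Hk; exact: PM | exact: kform_scale].
have L2 : lin_on (fun Y => (Y <= M')%MS) phi2.
  by move=> a Y Z HY HZ w; rewrite /phi2 Plin Hl ?PM // fl; ring.
have A2 : (0 < k.+1)%N -> asym_on (fun Y => (Y <= M')%MS) phi2.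
  move=> _ Y1 Y2 HY1 HY2 w; rewrite /phi2 /contract /=.
  have E1 := Hpsi2 Y1 HY1 w; have E2 := Hpsi2 Y2 HY2 w.
  rewrite /phi1 /contract in E1 E2; rewrite E1 E2.
  rewrite (decomp (Hk _ (PM Y1 HY1)) Y2 c (f Y2)).
  rewrite (decomp (Hk _ (PM Y2 HY2)) Y1 c (f Y1)).
  have := Ha isT (P Y1) (P Y2) (PM Y1 HY1) (PM Y2 HY2) w.
  rewrite /contract /P => ->; ring.
have [beta [Hb1 Hb2]] := IH k.+1 M' hd' phi2 K2 L2 A2.
by exists beta; split => // Y HY w; rewrite Hb2 ?MM' // /phi2 PY // fE // mul0r addr0.
Qed.

Lemma circ_ann_sub (R : realType) n k (E : 'rV[R]_n -> Prop) X :
  E X -> circ (Ann (k := k) E) X.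
Proof. by move=> EX eta [_ H] v; exact: H. Qed.

Lemma part1 (R : realType) n k (L : elt R n k.+2 -> Prop) :
  is_subspace L -> nonstandard L -> C3s L /\ ~ C3w L /\ ~ C1 L.
Proof.
move=> [HLk [HL0 [HLD HLZ]]] [Hiso Hns].
set E := pr1L L.
have E0 : E 0 by exists (fun _ => 0).
have ED : forall X Y, E X -> E Y -> E (X + Y).
  by move=> X Y [a Ha] [b Hb]; exists (fun v => a v + b v); exact: (HLD (X, a) (Y, b)).
have EZ : forall a X, E X -> E (a *: X).
  by move=> c X [a Ha]; exists (fun v => c * a v); exact: (HLZ c (X, a)).
have [X0 [cX0 nX0]] : exists X0, circ (Ann (k := k.+2) E) X0 /\ ~ E X0.
  apply: NNPP => H; apply: Hns => X; split; last exact: circ_ann_sub.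
  by move=> cX; apply: NNPP => nE; apply: H; exists X.
have Z0 : forall alpha, Ann (k := k.+2) E alpha -> alpha = (fun _ => 0).
  move=> alpha Ha; apply: functional_extensionality => v.
  exact: (annE_zero E0 ED EZ nX0 cX0 Ha).
have ALsub : forall alpha, AL L alpha -> Ann (k := k.+2) E alpha.
  move=> alpha HA; split; first exact: (HLk _ HA).
  move=> Y [b Hb] v; have [_ H] := Hiso _ HA.
  have := H _ Hb v; rewrite /pairing /= contract0 ?addr0 //.
  exact: (HLk _ Hb).
have C3 : C3s L.
  split => // alpha; split; last exact: ALsub.
  by move=> /Z0 ->; exact: HL0.
split => //; split.
  move=> [_ H]; apply: nX0; apply/H => eta /ALsub Heta v.
  exact: cX0.
move=> HC1.
have uniq : forall Y a b, L (Y, a) -> L (Y, b) -> a = b.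
  move=> Y a b Ha Hb.
  have H1 := HLZ (-1) _ Hb; have H2 := HLD _ _ Ha H1; rewrite /= in H2.
  have : AL L (fun v => a v + -1 * b v).
    by rewrite /AL; have -> : (0 : 'rV[R]_n) = Y + -1 *: Y by rewrite scaleN1r subrr.
  move=> /ALsub /Z0 H3; apply: functional_extensionality => v.
  have := congr1 (fun g => g v) H3; rewrite /= mulN1r => /eqP; rewrite subr_eq0.
  by move/eqP.
pose gam := fun Y : 'rV[R]_n =>
  epsilon (inhabits (fun _ : 'I_k.+2 -> 'rV[R]_n => (0 : R))) (fun a => L (Y, a)).
have Lgam : forall Y, E Y -> L (Y, gam Y).
  by move=> Y [a Ha]; apply: (epsilon_spec _ (fun a => L (Y, a))); exists a.
have gamE : forall Y a, L (Y, a) -> gam Y = a.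
  by move=> Y a Ha; apply: (uniq Y); [apply: Lgam; exists a|].
have [M HM] := subspace_mx E0 ED EZ.
pose phi := fun (Y : 'rV[R]_n) w => - contract X0 (gam Y) w.
have K : kf_on (fun Y => (Y <= M)%MS) phi.
  move=> Y /HM EY; apply: kform_opp; apply: contract_kform.
  exact: (HLk _ (Lgam Y EY)).
have Lin : lin_on (fun Y => (Y <= M)%MS) phi.
  move=> a Y Z /HM HY /HM HZ w; rewrite /phi.
  rewrite (gamE _ _ (HLD _ _ (HLZ a _ (Lgam Y HY)) (Lgam Z HZ))) /= /contract.
  by rewrite opprD mulrN.
have As : (0 < k.+1)%N -> asym_on (fun Y => (Y <= M)%MS) phi.
  move=> _ Y Z /HM HY /HM HZ w; rewrite /phi /contract /= opprK.
  have kY : is_kform (gam Y) := HLk _ (Lgam Y HY).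
  have kZ : is_kform (gam Z) := HLk _ (Lgam Z HZ).
  rewrite (kf_swap01 kY).
  have [_ H] := Hiso _ (Lgam Y HY).
  have := H _ (Lgam Z HZ) (cons_arg (k := k.+1) X0 w); rewrite /pairing /contract /=.
  move=> /eqP; rewrite addr_eq0 => /eqP ->.
  by rewrite (kf_swap01 kZ) !opprK.
have [beta [Hb1 Hb2]] := ext_mx (leqnn _) K Lin As.
have Ho : orth L (X0, beta).
  split => // [[Y a]] Ha v; rewrite /pairing /contract /=.
  have EY : E Y by exists a.
  rewrite Hb2; last by apply/HM.
  by rewrite /phi /contract (gamE _ _ Ha) addNr.
by have /HC1 HL := Ho; apply: nX0; exists beta.
Qed.

Definition Om (R : realType) n m (hm : (m <= n)%N) : Defs.form R n m :=
  fun v => \det (\matrix_(i < m, j < m) v i 0 (widen_ord hm j)).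
Arguments Om R {n m} hm.

Lemma lift_neqE m (i : 'I_m) r : (lift i r == i) = false.
Proof. by rewrite eq_sym (negbTE (neq_lift _ _)). Qed.

Lemma Om_kform (R : realType) n m (hm : (m <= n)%N) : is_kform (Om R hm).
Proof.
split.
  move=> v i a x y; rewrite /Om -[X in _ = _ + X]mul1r.
  apply: (determinant_multilinear (i0 := i)).
  - by apply/matrixP => r j; rewrite !mxE /upd eqxx !mxE mul1r.
  - by apply/matrixP => r j; rewrite !mxE /upd lift_neqE.
  - by apply/matrixP => r j; rewrite !mxE /upd lift_neqE.
move=> v i j ij vij; rewrite /Om; apply: (determinant_alternate ij) => l.
by rewrite !mxE vij.
Qed.

Definition eb (R : realType) n m (hm : (m <= n)%N) (j : 'I_m) : 'rV[R]_n :=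
  delta_mx 0 (widen_ord hm j).
Arguments eb R {n m} hm j.

Lemma Om_eb (R : realType) n m (hm : (m <= n)%N) : Om R hm (eb R hm) = 1.
Proof.
rewrite /Om -[RHS](det1 R m); congr (\det _); apply/matrixP => i j.
rewrite !mxE eqxx /=; congr (_%:R).
by rewrite -val_eqE /= val_eqE eq_sym.
Qed.

Lemma Om_col0 (R : realType) n m (hm : (m.+1 <= n)%N) (v : 'I_m.+1 -> 'rV[R]_n) :
  (forall i, v i 0 (widen_ord hm ord0) = 0) -> Om R hm v = 0.
Proof.
move=> H; rewrite /Om (expand_det_col _ ord0) big1 // => i _.
by rewrite mxE H mul0r.
Qed.

Lemma eb_coord (R : realType) n m (hm : (m <= n)%N) (j l : 'I_m) :
  eb R hm j 0 (widen_ord hm l) = (j == l)%:R.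
Proof. by rewrite /eb mxE eqxx /= -val_eqE /= val_eqE eq_sym. Qed.

Definition Hyp (R : realType) n k (hk : (k.+3 <= n)%N) : 'rV[R]_n -> Prop :=
  fun X => X 0 (widen_ord hk ord0) = 0.
Arguments Hyp R {n k} hk.

Lemma Hyp0 (R : realType) n k (hk : (k.+3 <= n)%N) : Hyp R hk 0.
Proof. by rewrite /Hyp mxE. Qed.
Lemma HypD (R : realType) n k (hk : (k.+3 <= n)%N) X Y :
  Hyp R hk X -> Hyp R hk Y -> Hyp R hk (X + Y).
Proof. by rewrite /Hyp mxE => -> ->; rewrite addr0. Qed.
Lemma HypZ (R : realType) n k (hk : (k.+3 <= n)%N) a X :
  Hyp R hk X -> Hyp R hk (a *: X).
Proof. by rewrite /Hyp mxE => ->; rewrite mulr0. Qed.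
Lemma Hyp_e0 (R : realType) n k (hk : (k.+3 <= n)%N) : ~ Hyp R hk (eb R hk ord0).
Proof. by rewrite /Hyp eb_coord eqxx => /eqP; rewrite oner_eq0. Qed.
Lemma Hyp_proj (R : realType) n k (hk : (k.+3 <= n)%N) (w : 'rV[R]_n) :
  Hyp R hk (w - w 0 (widen_ord hk ord0) *: eb R hk ord0).
Proof. by rewrite /Hyp mxE mxE mxE eb_coord eqxx mulr1 subrr. Qed.

Lemma circ_hyp (R : realType) n k (hk : (k.+3 <= n)%N) :
  circ (Ann (k := k.+2) (Hyp R hk)) (eb R hk ord0).
Proof.
move=> alpha [Ha HA] v; rewrite /contract -(cons_tl v).
set w0 := v ord0; set t := tl v.
rewrite (kf_swap01 Ha) (decomp Ha w0 (eb R hk ord0) (w0 0 (widen_ord hk ord0))).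
have := HA _ (Hyp_proj hk w0) (cons_arg (k := k.+1) (eb R hk ord0) t).
rewrite /contract => ->.
by rewrite (kf_alt01' (k := k.+1) isT Ha) mulr0 addr0 oppr0.
Qed.

Lemma ann_hyp_zero (R : realType) n k (hk : (k.+3 <= n)%N) alpha :
  Ann (k := k.+2) (Hyp R hk) alpha -> alpha = (fun _ => 0).
Proof.
move=> HA; apply: functional_extensionality => v.
exact: (annE_zero (@Hyp0 R _ _ hk) (@HypD R _ _ hk) (@HypZ R _ _ hk) (@Hyp_e0 R _ _ hk) (@circ_hyp R _ _ hk) HA v).
Qed.

Lemma nonstd_of (R : realType) n k (hk : (k.+3 <= n)%N) (L : elt R n k.+2 -> Prop) :
  isotropic L -> pr1L L = Hyp R hk -> nonstandard L.
Proof.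
move=> Hi E; split => // H; rewrite E in H.
by apply: (@Hyp_e0 R _ _ hk); apply/H; exact: (@circ_hyp R _ _ hk).
Qed.

Definition L1 (R : realType) n k (hk : (k.+3 <= n)%N) : elt R n k.+2 -> Prop :=
  fun p => Hyp R hk p.1 /\ p.2 = (fun _ => 0).

Lemma ex1 (R : realType) n k (hk : (k.+3 <= n)%N) :
  exists L : elt R n k.+2 -> Prop, is_subspace L /\ nonstandard L /\ C2s L /\ ~ C2w L.
Proof.
pose L := @L1 R n k hk.
have iso : isotropic L.
  move=> [X a] [HX /= ->]; split; first exact: kform0.
  move=> [Y b] [HY /= ->] v; rewrite /pairing /contract /=; exact: addr0.
have pr1 : pr1L L = Hyp R hk.
  apply: functional_extensionality => X; apply: propositional_extensionality.
  by split => [[a []]|HX] //; exists (fun _ => 0).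
have capV : LcapV L = Hyp R hk.
  apply: functional_extensionality => X; apply: propositional_extensionality.
  by split => [[]|HX].
exists L; split; last split; last split.
- split; first by move=> [X a] [_ /= ->]; exact: kform0.
  split; first by split => //; exact: (@Hyp0 R _ _ hk).
  split.
    move=> [X a] [Y b] [HX /= ->] [HY /= ->]; split; first exact: HypD.
    by apply: functional_extensionality => v; rewrite addr0.
  move=> c [X a] [HX /= ->]; split; first exact: HypZ.
  by apply: functional_extensionality => v; rewrite mulr0.
- exact: nonstd_of pr1.
- split => // alpha; rewrite capV; split.
    by move=> /ann_hyp_zero ->; exists 0; split => //; exact: (@Hyp0 R _ _ hk).
  move=> [X [_ /= ->]]; split; first exact: kform0.
  by move=> Y _ v; rewrite /contract.
- move=> [_ H]; apply: (@Hyp_e0 R _ _ hk); rewrite -capV; apply/H.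
  by move=> eta [X [_ /= ->]] v; rewrite /contract.
Qed.

Lemma cons3swap (R : realType) n k (a : Defs.form R n k.+3) : is_kform a ->
  forall (x y z : 'rV[R]_n) (t : 'I_k -> 'rV[R]_n),
  a (cons_arg (k := k.+3) x (cons_arg (k := k.+2) y (cons_arg (k := k.+1) z t))) =
  - a (cons_arg (k := k.+3) z (cons_arg (k := k.+2) y (cons_arg (k := k.+1) x t))).
Proof.
move=> Ha x y z t.
pose base := cons_arg (k := k.+3) 0 (cons_arg (k := k.+2) y (cons_arg (k := k.+1) 0 t)).
have E : forall p q, cons_arg (k := k.+3) p (cons_arg (k := k.+2) y (cons_arg (k := k.+1) q t)) =
  upd (upd base ord0 p) (lift ord0 (lift ord0 ord0)) q.
  by move=> p q; rewrite /base upd_cons0 upd_consS upd_consS upd_cons0.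
by rewrite (E x z) (E z x) (kf_swap Ha) // neq_lift.
Qed.

Lemma cons3alt (R : realType) n k (a : Defs.form R n k.+3) : is_kform a ->
  forall (x y : 'rV[R]_n) (t : 'I_k -> 'rV[R]_n),
  a (cons_arg (k := k.+3) x (cons_arg (k := k.+2) y (cons_arg (k := k.+1) x t))) = 0.
Proof. by move=> Ha x y t; apply: eq_opp0; rewrite {1}cons3swap. Qed.

Lemma cons2_upd (R : realType) n k (v : 'I_k.+2 -> 'rV[R]_n) a b :
  cons_arg (k := k.+2) a (cons_arg (k := k.+1) b (tl (tl v))) =
  upd (upd v ord0 a) (lift ord0 ord0) b.
Proof.
have Ev : v = cons_arg (k := k.+2) (v ord0) (cons_arg (k := k.+1) (tl v ord0) (tl (tl v))).
  by rewrite !cons_tl.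
by rewrite [in RHS]Ev upd_cons0 upd_consS upd_cons0.
Qed.

Lemma Hyp_eb (R : realType) n k (hk : (k.+3 <= n)%N) (j : 'I_k.+3) :
  j != ord0 -> Hyp R hk (eb R hk j).
Proof. by move=> /negbTE h; rewrite /Hyp eb_coord h. Qed.

Definition om (R : realType) n k (hk : (k.+3 <= n)%N) (X : 'rV[R]_n) : Defs.form R n k.+2 :=
  contract X (Om R hk).
Arguments om R {n k} hk X.

Definition L2 (R : realType) n k (hk : (k.+3 <= n)%N) : elt R n k.+2 -> Prop :=
  fun p => Hyp R hk p.1 /\ p.2 = om R hk p.1.

Lemma ex2 (R : realType) n k (hk : (k.+3 <= n)%N) :
  exists L : elt R n k.+2 -> Prop, is_subspace L /\ nonstandard L /\ C2w L /\ ~ C2s L.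
Proof.
pose L := @L2 R n k hk.
have OK := Om_kform R hk.
have omK : forall X, is_kform (om R hk X) by move=> X; exact: contract_kform.
have iso : isotropic L.
  move=> [X a] [HX /= ->]; split; first exact: omK.
  move=> [Y b] [HY /= ->] v; rewrite /pairing /om /contract /=.
  by rewrite (kf_swap01 OK) addNr.
have pr1 : pr1L L = Hyp R hk.
  apply: functional_extensionality => X; apply: propositional_extensionality.
  by split => [[a []]|HX] //; exists (om R hk X).
have KX : forall X, circ (pr2L L) X -> forall Y, Hyp R hk Y -> forall v,
    Om R hk (cons_arg (k := k.+3) Y (cons_arg (k := k.+2) X v)) = 0.
  move=> X cX Y HY v; have := cX (om R hk Y) (ex_intro _ Y (conj HY erefl)) v.
  by rewrite /om /contract.
have Hdec : forall w : 'rV[R]_n, w = w 0 (widen_ord hk ord0) *: eb R hk ord0 +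
    (w - w 0 (widen_ord hk ord0) *: eb R hk ord0) by move=> w; rewrite addrC subrK.
exists L; split; last split; last split.
- split; first by move=> [X a] [_ /= ->]; exact: omK.
  split.
    split; first exact: (@Hyp0 R _ _ hk).
    by apply: functional_extensionality => v; rewrite /= /om contract0.
  split.
    move=> [X a] [Y b] [HX /= ->] [HY /= ->]; split; first exact: HypD.
    by apply: functional_extensionality => v; rewrite /om contract_add.
  move=> c [X a] [HX /= ->]; split; first exact: HypZ.
  by apply: functional_extensionality => v; rewrite /om contract_scale.
- exact: nonstd_of pr1.
- split => // X; split.
    move=> [HX /= HoX] eta [Y [HY /= ->]] v.
    rewrite /om /contract (kf_swap01 OK).
    have := congr1 (fun g => g (cons_arg (k := k.+2) Y v)) HoX.
    by rewrite /= /om /contract => <-; rewrite oppr0.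
  move=> cX; have K := KX X cX.
  have HX : Hyp R hk X.
    have T := K _ (@Hyp_eb R _ _ hk (lift ord0 ord0) (negbT (lift_neqE _ _))) (tl (tl (eb R hk))).
    rewrite cons2_upd (Hdec X) OK.1 (kf_swap OK) ?upd_id ?Om_eb in T; last exact: neq_lift.
    rewrite (@Om_col0 R n k.+2 hk) ?addr0 in T.
      by rewrite /Hyp; lra.
    move=> i; rewrite /upd; case: eqP => [_|_]; first exact: Hyp_proj.
    case: eqP => [_|/eqP ni0]; first exact: Hyp_eb (negbT (lift_neqE _ _)).
    exact: Hyp_eb.
  split => //=; apply: functional_extensionality => v; rewrite /om /contract.
  rewrite -(cons_tl v) -(cons_tl (tl v)).
  set v1 := v ord0; set t0 := tl v ord0; set t' := tl (tl v).
  rewrite (kf_swap01 OK) (decomp OK v1 (eb R hk ord0) (v1 0 (widen_ord hk ord0))).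
  rewrite K; last exact: Hyp_proj.
  rewrite (cons3swap OK) (decomp OK t0 (eb R hk ord0) (t0 0 (widen_ord hk ord0))).
  rewrite K; last exact: Hyp_proj.
  by rewrite cons3alt // !mulr0 !add0r !oppr0 mulr0 oppr0.
- move=> [_ H].
  have A : Ann (LcapV L) (om R hk (eb R hk ord0)).
    split; first exact: omK.
    move=> X [HX /= HoX] v; rewrite /om /contract (kf_swap01 OK).
    have := congr1 (fun g => g (cons_arg (k := k.+2) (eb R hk ord0) v)) HoX.
    by rewrite /= /om /contract => <-; rewrite oppr0.
  have [Y [HY /= HYe]] := (H _).1 A.
  have := congr1 (fun g => g (tl (eb R hk))) HYe; rewrite /= /om /contract.
  rewrite cons_tl Om_eb -(upd_cons0 (eb R hk ord0) Y) cons_tl.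
  rewrite (@Om_col0 R n k.+2 hk); first by move=> /eqP; rewrite oner_eq0.
  move=> i; rewrite /upd; case: eqP => [_|/eqP ni0]; first exact: HY.
  exact: Hyp_eb.
Qed.

Unset Implicit Arguments. Set Strict Implicit.

Theorem propositionA5 (R : realType) (n k : nat) :
  (2 <= k)%N -> (k <= n.-1)%N ->
  (forall L : elt R n k -> Prop, is_subspace L -> nonstandard L ->
     C3s L /\ ~ C3w L /\ ~ C1 L) /\
  (exists L : elt R n k -> Prop, is_subspace L /\ nonstandard L /\ C2s L /\ ~ C2w L) /\
  (exists L : elt R n k -> Prop, is_subspace L /\ nonstandard L /\ C2w L /\ ~ C2s L).
Proof.
case: k => [//|[//|k]] _ hkn.
have hk : (k.+3 <= n)%N by move: hkn; case: n.
split; first by move=> L; exact: part1.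
split; [exact: ex1 hk | exact: ex2 hk].
Qed.
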